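(* Let $A=(A,\wedge,\vee,\cdot,\to,1)$ be a $\mathsf{DLCMI}$ and $a\in A$. Then $(1\to a)^n\le 1\to a^n$ for every natural number $n$.
   Context: An algebra $(A,\wedge,\vee,\cdot,\to,1)$ of type $(2,2,2,2,0)$ is a $\mathsf{DLCMI}$ if for all $a,b,c\in A$: (1) $(A,\wedge,\vee)$ is a distributive lattice; (2) $1$ is its largest element; (3) $(A,\cdot,1)$ is a commutative monoid; (4) $(a\to b)\wedge(a\to c)=a\to(b\wedge c)$; (5) $(a\to c)\wedge(b\to c)=(a\vee b)\to c$; (6) $a\to a=1$; (7) $(a\vee b)\cdot c=(a\cdot c)\vee(b\cdot c)$; (8) $(a\to b)\cdot(b\to c)\le a\to c$; (9) $a\to b\le (a\cdot c)\to(b\cdot c)$. Powers: $x^0=1$, $x^{m}=x\cdot x^{m-1}$. *)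

(* Defs.v *)
Set Implicit Arguments.

Record DLCMI (A : Type) := {
  meet : A -> A -> A;
  join : A -> A -> A;
  mul  : A -> A -> A;
  imp  : A -> A -> A;
  one  : A;
  meet_comm  : forall a b, meet a b = meet b a;
  join_comm  : forall a b, join a b = join b a;
  meet_assoc : forall a b c, meet a (meet b c) = meet (meet a b) c;
  join_assoc : forall a b c, join a (join b c) = join (join a b) c;
  meet_absorb : forall a b, meet a (join a b) = a;
  join_absorb : forall a b, join a (meet a b) = a;
  meet_join_distr : forall a b c, meet a (join b c) = join (meet a b) (meet a c);
  one_top : forall a, meet a one = a;
  mul_assoc : forall a b c, mul a (mul b c) = mul (mul a b) c;
  mul_comm  : forall a b, mul a b = mul b a;
  mul_one   : forall a, mul a one = a;
  ax4 : forall a b c, meet (imp a b) (imp a c) = imp a (meet b c);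
  ax5 : forall a b c, meet (imp a c) (imp b c) = imp (join a b) c;
  ax6 : forall a, imp a a = one;
  ax7 : forall a b c, mul (join a b) c = join (mul a c) (mul b c);
  ax8 : forall a b c, meet (mul (imp a b) (imp b c)) (imp a c) = mul (imp a b) (imp b c);
  ax9 : forall a b c, meet (imp a b) (imp (mul a c) (mul b c)) = imp a b
}.

Definition dle (A : Type) (D : DLCMI A) (x y : A) : Prop := meet D x y = x.

Fixpoint dpow (A : Type) (D : DLCMI A) (x : A) (n : nat) : A :=
  match n with
  | O => one D
  | S m => mul D x (dpow D x m)
  end.

(* Main.v *)
Require Import Defs.

Section S.
Variable A : Type.
Variable D : DLCMI A.

Lemma dle_trans x y z : dle D x y -> dle D y z -> dle D x z.
Proof.
  unfold dle; intros H1 H2. rewrite <- H1, <- meet_assoc, H2. reflexivity.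
Qed.

Lemma dle_join {x y} : dle D x y -> join D x y = y.
Proof.
  unfold dle; intros H. rewrite <- H, join_comm, meet_comm. apply join_absorb.
Qed.

Lemma mul_monl x y c : dle D x y -> dle D (mul D x c) (mul D y c).
Proof.
  intros H. unfold dle. rewrite <- (dle_join H), ax7. apply meet_absorb.
Qed.

Lemma mul_monr x y c : dle D x y -> dle D (mul D c x) (mul D c y).
Proof.
  intros H. rewrite (mul_comm D c x), (mul_comm D c y). apply mul_monl; auto.
Qed.

End S.

Theorem lemma3p7 (A : Type) (D : DLCMI A) (a : A) (n : nat) :
  dle D (dpow D (imp D (one D) a) n) (imp D (one D) (dpow D a n)).
Proof.
  induction n as [|n IH]; simpl.
  - unfold dle. rewrite ax6. apply one_top.
  - eapply dle_trans. apply mul_monr. exact IH.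
    eapply dle_trans. apply mul_monl.
    + pose proof (ax9 D (one D) a (dpow D a n)) as H.
      rewrite (mul_comm D (one D)), mul_one in H. exact H.
    + unfold dle. rewrite (mul_comm D (imp D _ (mul D a _))). apply ax8.
Qed.
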